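(* Let $n \ge 2$ be an integer, $\lambda > 0$ a real number and $C \ge 1$. There exists a constant $C'>0$ depending only on $n$ and $C$ such that the following hold. (i) Let $\xi$ be a real number with $C^{-1} \le |\xi| \le C$, and let $(p_0,\ldots,p_n) \in \mathbb{Z}^{n+1}$ with $q := p_0 \ge 1$ and $|q\xi^i - p_i| \le C q^{-\lambda}$ for $i = 1,\ldots,n$. Then $|p_i\xi - p_{i+1}| \le C' q^{-\lambda}$ for all $i\in\{0,\ldots,n-1\}$, and $|p_{i-1}p_{i+1} - p_i^2| \le C' q^{1-\lambda}$ for all $i \in \{1,\ldots,n-1\}$. (ii) Conversely, let $(p_0,\ldots,p_n) \in \mathbb{Z}^{n+1}$ with $q := p_0 \ge 1$, $C^{-1} q \le |p_i| \le C q$ for all $i \in \{0,\ldots,n\}$, and $|p_{i-1}p_{i+1} - p_i^2| \le C q^{1-\lambda}$ for all $i \in \{1,\ldots,n-1\}$. Then there exists a real number $\xi$ with $|q\xi^i - p_i| \le C' q^{-\lambda}$ for $i = 1,\ldots,n$.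
   Context: The paper writes these statements with Vinogradov notation ($\ll$, $\asymp$ with implied constants depending on the fixed data); here the implied constants are made explicit. *)

(* Defs.v *)
From Stdlib Require Import Reals ZArith.
Open Scope R_scope.

Definition rpow (q s : R) : R := Rpower q s.

(* Main.v *)
Require Import Defs.
From Stdlib Require Import Reals ZArith.
From Stdlib Require Import Lra Lia Psatz.
Open Scope R_scope.

Lemma mulb x y A B : Rabs x <= A -> Rabs y <= B -> Rabs (x*y) <= A*B.
Proof. intros; rewrite Rabs_mult; apply Rmult_le_compat; auto using Rabs_pos. Qed.

Lemma powb X C n j : Rabs X <= C -> 1 <= C -> (j <= n)%nat -> Rabs (X^j) <= C^n.
Proof.
  intros. rewrite <- RPow_abs. apply Rle_trans with (C^j).
  apply pow_incr; split; auto using Rabs_pos. apply Rle_pow; auto.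
Qed.

Lemma rp_facts Q l : 1 <= Q -> 0 < l ->
  0 < Rpower Q (-l) /\ Rpower Q (-l) <= 1 /\ Rpower Q (1-l) = Q * Rpower Q (-l).
Proof.
  intros HQ Hl. split; [apply exp_pos|split].
  - unfold Rpower. rewrite <- exp_0.
    assert (0 <= ln Q) by (rewrite <- ln_1; destruct (Req_dec Q 1) as [->|]; [lra|left; apply ln_increasing; lra]).
    destruct (Req_dec (- l * ln Q) 0) as [E|E]; [rewrite E; lra|].
    left; apply exp_increasing. nra.
  - replace (1 - l) with (1 + -l) by ring. rewrite Rpower_plus, Rpower_1; lra.
Qed.

Lemma ratio (P : nat -> R) (C a : R) (n : nat) :
  1 <= C -> 1 <= P 0%nat -> 0 < a ->
  (forall i, (i <= n)%nat -> P 0%nat / C <= Rabs (P i) <= C * P 0%nat) ->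
  (forall i, (1 <= i <= n - 1)%nat ->
     Rabs (P (i-1)%nat * P (S i) - P i * P i) <= C * (P 0%nat * a)) ->
  forall k, (1 <= k <= n)%nat ->
  Rabs (P k / P (k-1)%nat - P 1%nat / P 0%nat) <= INR (k-1) * (C^3 * a / P 0%nat).
Proof.
  intros HC HQ Ha Hb HD k. induction k as [|m IH]; intros Hk; [lia|].
  destruct (Nat.eq_dec m 0) as [->|Hm].
  - simpl. replace (P 1%nat / P 0%nat - P 1%nat / P 0%nat) with 0 by ring.
    rewrite Rabs_R0; lra.
  - specialize (IH ltac:(lia)).
    replace (S m - 1)%nat with m by lia. replace (m - 1)%nat with (m-1)%nat in IH by lia.
    set (Q := P 0%nat) in *.
    assert (Hm1 := Hb (m-1)%nat ltac:(lia)). assert (Hm0 := Hb m ltac:(lia)).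
    assert (HQC : 0 < Q / C) by (apply Rdiv_lt_0_compat; lra).
    assert (Pm1 : P (m-1)%nat <> 0) by (intro E; rewrite E, Rabs_R0 in Hm1; lra).
    assert (Pm : P m <> 0) by (intro E; rewrite E, Rabs_R0 in Hm0; lra).
    assert (E : P (S m) / P m - P 1%nat / Q =
      (P (m-1)%nat * P (S m) - P m * P m) / (P (m-1)%nat * P m)
      + (P m / P (m-1)%nat - P 1%nat / Q)).
    { field. split; [lra|auto]. }
    rewrite E. eapply Rle_trans; [apply Rabs_triang|].
    replace (INR m) with (INR (m-1) + 1) by (rewrite <- S_INR; f_equal; lia).
    rewrite Rmult_plus_distr_r, Rmult_1_l, (Rplus_comm (INR (m-1) * _)). apply Rplus_le_compat; [|exact IH].
    assert (HDm := HD m ltac:(lia)).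
    unfold Rdiv. rewrite Rabs_mult, Rabs_inv, Rabs_mult.
    assert (Hprod : (Q/C) * (Q/C) <= Rabs (P (m-1)%nat) * Rabs (P m)).
    { apply Rmult_le_compat; lra. }
    assert (HQQ: (Q/C)*(Q/C) = Q*Q / (C*C)) by (field; lra).
    assert (0 < Rabs (P (m - 1)%nat) * Rabs (P m)) by (apply Rmult_lt_0_compat; lra).
    apply Rmult_le_reg_r with (Rabs (P (m - 1)%nat) * Rabs (P m)); auto.
    rewrite Rmult_assoc, Rinv_l by lra. rewrite Rmult_1_r.
    eapply Rle_trans; [exact HDm|].
    apply Rle_trans with (C ^ 3 * a * / Q * ((Q/C)*(Q/C))).
    + right. field; lra.
    + apply Rmult_le_compat_l; [|exact Hprod].
      apply Rmult_le_pos; [|left; apply Rinv_0_lt_compat; lra].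
      apply Rmult_le_pos; [apply pow_le|]; lra.
Qed.

Lemma partii (P : nat -> R) (C a : R) (n : nat) :
  (1 <= n)%nat -> 1 <= C -> 1 <= P 0%nat -> 0 < a ->
  (forall i, (i <= n)%nat -> P 0%nat / C <= Rabs (P i) <= C * P 0%nat) ->
  (forall i, (1 <= i <= n - 1)%nat ->
     Rabs (P (i-1)%nat * P (S i) - P i * P i) <= C * (P 0%nat * a)) ->
  exists X, forall k, (1 <= k <= n)%nat ->
    Rabs (P 0%nat * X ^ k - P k) <= INR n * INR n * C ^ (n + 4) * a.
Proof.
  intros Hn HC HQ Ha Hb HD.
  pose proof (ratio P C a n HC HQ Ha Hb HD) as Hr.
  set (Q := P 0%nat) in *.
  exists (P 1%nat / Q).
  set (X := P 1%nat / Q).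
  assert (HQC : 0 < Q / C) by (apply Rdiv_lt_0_compat; lra).
  assert (HX : Rabs X <= C).
  { unfold X, Rdiv. rewrite Rabs_mult, Rabs_inv, (Rabs_right Q) by lra.
      destruct (Hb 1%nat ltac:(lia)).
      apply Rmult_le_reg_r with Q; [lra|]. rewrite Rmult_assoc, Rinv_l by lra. lra. }
  assert (Hstep : forall k, (k + 1 <= n)%nat ->
     Rabs (X * P k - P (S k)) <= INR n * C ^ 4 * a).
  { intros k Hk. specialize (Hr (S k) ltac:(lia)).
    replace (S k - 1)%nat with k in Hr by lia. fold Q X in Hr.
    destruct (Hb k ltac:(lia)) as [Hk1 Hk2].
    assert (Pk : P k <> 0) by (intro E; rewrite E, Rabs_R0 in Hk1; lra).
    replace (X * P k - P (S k)) with (- (P k * (P (S k) / P k - X))) by (field; auto).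
    rewrite Rabs_Ropp. eapply Rle_trans; [apply mulb; [apply Rle_refl|exact Hr]|].
    assert (HkI : INR k <= INR n) by (apply le_INR; lia).
    assert (0 <= INR k) by apply pos_INR.
    assert (HC4 : 0 <= C^3) by (apply pow_le; lra).
    apply Rle_trans with (C * Q * (INR k * (C ^ 3 * a / Q))).
    - apply Rmult_le_compat_r; [|lra]. apply Rmult_le_pos; [lra|].
      unfold Rdiv. apply Rmult_le_pos; [apply Rmult_le_pos; lra|].
      left; apply Rinv_0_lt_compat; lra.
    - replace (C * Q * (INR k * (C ^ 3 * a / Q))) with (INR k * C^4 * a) by (field; lra).
      apply Rmult_le_compat_r; [lra|]. apply Rmult_le_compat_r; [apply pow_le; lra|lra]. }
  assert (Hind : forall k, (k <= n)%nat ->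
     Rabs (Q * X ^ k - P k) <= INR k * C ^ k * (INR n * C ^ 4 * a)).
  { induction k as [|k IH]; intros Hk.
    - rewrite pow_O. unfold Q. rewrite Rmult_1_r, Rminus_diag, Rabs_R0. simpl. lra.
    - specialize (IH ltac:(lia)). specialize (Hstep k ltac:(lia)).
      replace (Q * X ^ S k - P (S k)) with (X * (Q * X ^ k - P k) + (X * P k - P (S k)))
        by (simpl; ring).
      eapply Rle_trans; [apply Rabs_triang|].
      eapply Rle_trans; [apply Rplus_le_compat; [apply mulb; [exact HX|exact IH]|exact Hstep]|].
      rewrite S_INR. change (C ^ S k) with (C * C ^ k).
      set (T := INR n * C ^ 4 * a).
      assert (0 <= T) by (unfold T; apply Rmult_le_pos; [apply Rmult_le_pos; [apply pos_INR|apply pow_le; lra]|lra]).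
      assert (1 <= C ^ k) by (apply pow_R1_Rle; lra).
      assert (0 <= INR k) by apply pos_INR.
      assert (0 <= INR k * C^k) by nra.
      assert (0 <= T * (C * C ^ k - 1)) by (apply Rmult_le_pos; nra).
      nra. }
  intros k Hk. eapply Rle_trans; [apply (Hind k ltac:(lia))|].
  assert (HkI : INR k <= INR n) by (apply le_INR; lia).
  assert (0 <= INR k) by apply pos_INR.
  assert (Ck : C ^ k <= C ^ n) by (apply Rle_pow; [lra|lia]).
  assert (1 <= C ^ k) by (apply pow_R1_Rle; lra).
  assert (0 <= INR n * C^4 * a) by (apply Rmult_le_pos; [apply Rmult_le_pos; [apply pos_INR|apply pow_le; lra]|lra]).
  replace (INR n * INR n * C ^ (n + 4) * a) with ((INR n * C ^ n) * (INR n * C ^ 4 * a))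
    by (rewrite pow_add; ring).
  apply Rmult_le_compat_r; [lra|]. apply Rmult_le_compat; lra.
Qed.

Lemma abs5 a b c d e : Rabs (a + b + c + d + e) <= Rabs a + Rabs b + Rabs c + Rabs d + Rabs e.
Proof.
  repeat (eapply Rle_trans; [apply Rabs_triang|apply Rplus_le_compat_r]). lra.
Qed.

Lemma parti (P : nat -> R) (X C a : R) (n : nat) :
  (2 <= n)%nat -> 1 <= C -> 1 <= P 0%nat -> 0 < a -> a <= 1 -> Rabs X <= C ->
  (forall i, (1 <= i <= n)%nat -> Rabs (P 0%nat * X ^ i - P i) <= C * a) ->
  (forall i, (i <= n - 1)%nat -> Rabs (P i * X - P (S i)) <= (C * C + C) * a) /\
  (forall i, (1 <= i <= n - 1)%nat ->
     Rabs (P (i-1)%nat * P (S i) - P i * P i) <= (4 * C ^ (n + 1) + 2 * C ^ 2) * (P 0%nat * a)).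
Proof.
  intros Hn HC HQ Ha Ha1 HX He.
  set (Q := P 0%nat) in *.
  assert (He' : forall j, (j <= n)%nat -> Rabs (Q * X ^ j - P j) <= C * a).
  { intros [|j] Hj.
    - rewrite pow_O. unfold Q. rewrite Rmult_1_r, Rminus_diag, Rabs_R0. nra.
    - apply He; lia. }
  split.
  - intros i Hi.
    assert (E1 := He' i ltac:(lia)). assert (E2 := He' (S i) ltac:(lia)).
    replace (P i * X - P (S i)) with (- ((Q * X ^ i - P i) * X) + (Q * X ^ S i - P (S i)))
      by (simpl; ring).
    eapply Rle_trans; [apply Rabs_triang|]. rewrite Rabs_Ropp.
    eapply Rle_trans; [apply Rplus_le_compat; [apply mulb; [exact E1|exact HX]|exact E2]|].
    nra.
  - intros i Hi.
    assert (E0 := He' (i-1)%nat ltac:(lia)). assert (E1 := He' i ltac:(lia)).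
    assert (E2 := He' (S i) ltac:(lia)).
    assert (B0 := powb X C n (i-1) HX HC ltac:(lia)).
    assert (B1 := powb X C n i HX HC ltac:(lia)).
    assert (B2 := powb X C n (S i) HX HC ltac:(lia)).
    set (e0 := Q * X ^ (i-1) - P (i-1)%nat) in *.
    set (e1 := Q * X ^ i - P i) in *.
    set (e2 := Q * X ^ S i - P (S i)) in *.
    set (u0 := X ^ (i-1)) in *. set (u1 := X ^ i) in *. set (u2 := X ^ S i) in *.
    assert (Hu : u0 * u2 = u1 * u1).
    { unfold u0, u1, u2. rewrite <- !pow_add. f_equal. lia. }
    replace (P (i-1)%nat * P (S i) - P i * P i) with
      (- (Q * (u0 * e2)) - Q * (u2 * e0) + e0 * e2 + 2 * (Q * (u1 * e1)) - e1 * e1)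
      by (unfold e0, e1, e2; fold u0 u1 u2; nra).
    set (W := C ^ n) in *.
    assert (HW : 1 <= W) by (apply pow_R1_Rle; lra).
    assert (Hq : forall u e, Rabs u <= W -> Rabs e <= C * a -> Rabs (Q * (u * e)) <= Q * (W * (C * a))).
    { intros u e Hu' He2. rewrite Rabs_mult, (Rabs_right Q) by lra.
      apply Rmult_le_compat_l; [lra|]. apply mulb; auto. }
    assert (Hee : forall e e', Rabs e <= C * a -> Rabs e' <= C * a -> Rabs (e * e') <= C * a * (C * a)).
    { intros. apply mulb; auto. }
    unfold Rminus.
    eapply Rle_trans; [apply abs5|].
    rewrite !Rabs_Ropp.
    replace (Rabs (2 * (Q * (u1 * e1)))) with (2 * Rabs (Q * (u1 * e1)))
      by (rewrite (Rabs_mult 2), (Rabs_right 2) by lra; ring).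
    assert (T1 := Hq u0 e2 B0 E2). assert (T2 := Hq u2 e0 B2 E0). assert (T3 := Hq u1 e1 B1 E1).
    assert (T4 := Hee e0 e2 E0 E2). assert (T5 := Hee e1 e1 E1 E1).
    apply Rle_trans with (4 * (Q * (W * (C * a))) + 2 * (C * a * (C * a))); [lra|].
    replace (C ^ (n + 1)) with (W * C) by (unfold W; rewrite pow_add; ring).
    assert (0 <= C * C * a * (Q - a)) by (apply Rmult_le_pos; [apply Rmult_le_pos; nra|lra]).
    nra.
Qed.
Theorem proposition4p1 (n : nat) (C : R) :
  (2 <= n)%nat -> 1 <= C ->
  exists C' : R, 0 < C' /\
  forall lambda : R, 0 < lambda ->
  (* (i) *)
  (forall (xi : R) (p : nat -> Z),
     / C <= Rabs xi <= C ->
     (1 <= p 0%nat)%Z ->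
     (forall i : nat, (1 <= i <= n)%nat ->
        Rabs (IZR (p 0%nat) * xi ^ i - IZR (p i))
          <= C * rpow (IZR (p 0%nat)) (- lambda)) ->
     (forall i : nat, (i <= n - 1)%nat ->
        Rabs (IZR (p i) * xi - IZR (p (S i)))
          <= C' * rpow (IZR (p 0%nat)) (- lambda)) /\
     (forall i : nat, (1 <= i <= n - 1)%nat ->
        Rabs (IZR (p (i - 1)%nat * p (S i) - p i * p i)%Z)
          <= C' * rpow (IZR (p 0%nat)) (1 - lambda)))
  /\
  (* (ii) *)
  (forall p : nat -> Z,
     (1 <= p 0%nat)%Z ->
     (forall i : nat, (i <= n)%nat ->
        / C * IZR (p 0%nat) <= Rabs (IZR (p i)) <= C * IZR (p 0%nat)) ->
     (forall i : nat, (1 <= i <= n - 1)%nat ->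
        Rabs (IZR (p (i - 1)%nat * p (S i) - p i * p i)%Z)
          <= C * rpow (IZR (p 0%nat)) (1 - lambda)) ->
     exists xi : R,
       forall i : nat, (1 <= i <= n)%nat ->
         Rabs (IZR (p 0%nat) * xi ^ i - IZR (p i))
           <= C' * rpow (IZR (p 0%nat)) (- lambda)).
Proof.
  intros Hn HC.
  assert (HCp : 0 < C ^ (n + 1)) by (apply pow_lt; lra).
  assert (HCp2 : 0 < C ^ (n + 4)) by (apply pow_lt; lra).
  assert (HnI : 0 <= INR n) by apply pos_INR.
  exists ((C * C + C) + (4 * C ^ (n + 1) + 2 * C ^ 2) + INR n * INR n * C ^ (n + 4)).
  split.
  { assert (0 <= INR n * INR n * C ^ (n + 4)) by (apply Rmult_le_pos; nra).
    assert (0 < C ^ 2) by nra. nra. }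
  intros lam Hlam. split.
  - intros xi p Hxi Hp0 Hi.
    assert (HQ : 1 <= IZR (p 0%nat)) by (apply IZR_le; lia).
    destruct (rp_facts _ _ HQ Hlam) as [Ha [Ha1 Hr]].
    unfold rpow in *. rewrite Hr.
    destruct (parti (fun i => IZR (p i)) xi C (Rpower (IZR (p 0%nat)) (- lam)) n
               Hn HC HQ Ha Ha1 ltac:(lra) Hi) as [H1 H2].
    assert (0 <= INR n * INR n * C ^ (n + 4)) by (apply Rmult_le_pos; nra).
    assert (0 < C ^ 2) by nra.
    split.
    + intros i Hi'. eapply Rle_trans; [apply (H1 i Hi')|].
      apply Rmult_le_compat_r; lra.
    + intros i Hi'. rewrite minus_IZR, !mult_IZR.
      eapply Rle_trans; [apply (H2 i Hi')|].
      apply Rmult_le_compat_r; [nra|lra].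
  - intros p Hp0 Hb HD.
    assert (HQ : 1 <= IZR (p 0%nat)) by (apply IZR_le; lia).
    destruct (rp_facts _ _ HQ Hlam) as [Ha [Ha1 Hr]].
    unfold rpow in *. rewrite Hr in HD.
    destruct (partii (fun i => IZR (p i)) C (Rpower (IZR (p 0%nat)) (- lam)) n
               ltac:(lia) HC HQ Ha) as [X HX].
    { intros i Hi. unfold Rdiv. rewrite Rmult_comm. apply Hb; auto. }
    { intros i Hi. specialize (HD i Hi). rewrite minus_IZR, !mult_IZR in HD. exact HD. }
    exists X. intros i Hi. eapply Rle_trans; [apply (HX i Hi)|].
    assert (0 < C ^ 2) by nra.
    apply Rmult_le_compat_r; lra.
Qed.
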